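(* Let $M\models\mathrm{AA}_0$ and $x\in M$. (i) $x$ is normal if and only if $1\le x$; in particular, if $x<1$ then $|x|<1$. (ii) $x$ is idempotent if and only if $x\le 1$.
   Context: Structures are complete metric spaces of diameter at most $1$ in $L=\{+,\cdot,\wedge,\vee,0,1\}$ (operations $1$-Lipschitz, $d$ the only relation symbol); affine conditions use formulas built from $1$ and $d(t_1,t_2)$ via $+$, real scalar multiples, $\sup$, $\inf$, free variables universally quantified. $|x|=d(x,0)$; $x$ is normal if $|x|=1$; $x$ is idempotent if $x^2=x$; $x\le y$ means $x\wedge y=x$, $x<y$ means $x\le y$ and $x\ne y$; $nx$, $x^n$ iterated sum/product. $\mathrm{AA}_0$ consists of: (A1) the identities of the nonnegative part of a lattice-ordered commutative ring with identity (commutative semiring axioms, lattice axioms, distributivity of $+,\cdot$ over $\wedge,\vee$, $0\le x$); (A2) $\inf_y d(x,(x\wedge y)+1)=1-|x|$ and $x\le x^2$; (A3) $d(x+z,y+z)=d(x,y)$; (A4) $d(y,z)\le d(xy,xz)+1-|x|$; (A5) $d(xy,xz)=d(x^ny,x^nz)\le d(y,z)$; (A6) $d(nx,ny)=d(x^n,y^n)=d(x,y)$, $n\ge1$; (A7) $|x\wedge y|+|x\vee y|=|x|+|y|$; (A8) $|xy+z|=|(x\wedge y)+z|$; (A9) $|x+y+z|=|(x\vee y)+z|$; (A10) $\inf_t d((x\wedge y)+t,y)=0$. *)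

(* Defs.v *)
From Stdlib Require Import Reals.
Open Scope R_scope.

Record LStruct := {
  carrier :> Type;
  dist : carrier -> carrier -> R;
  add : carrier -> carrier -> carrier;
  mul : carrier -> carrier -> carrier;
  meet : carrier -> carrier -> carrier;
  join : carrier -> carrier -> carrier;
  zero : carrier;
  one : carrier;
  dist_refl : forall x, dist x x = 0;
  dist_sep : forall x y, dist x y = 0 -> x = y;
  dist_sym : forall x y, dist x y = dist y x;
  dist_tri : forall x y z, dist x z <= dist x y + dist y z;
  dist_nonneg : forall x y, 0 <= dist x y;
  dist_le1 : forall x y, dist x y <= 1;
  dist_complete : forall u : nat -> carrier,
    (forall eps, 0 < eps -> exists N, forall m n, (N <= m)%nat -> (N <= n)%nat ->
        dist (u m) (u n) < eps) ->
    exists l, forall eps, 0 < eps -> exists N, forall n, (N <= n)%nat -> dist (u n) l < eps;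
  add_lip : forall x x' y y', dist (add x y) (add x' y') <= dist x x' + dist y y';
  mul_lip : forall x x' y y', dist (mul x y) (mul x' y') <= dist x x' + dist y y';
  meet_lip : forall x x' y y', dist (meet x y) (meet x' y') <= dist x x' + dist y y';
  join_lip : forall x x' y y', dist (join x y) (join x' y') <= dist x x' + dist y y'
}.

Arguments dist {l} x y.
Arguments add {l} x y.
Arguments mul {l} x y.
Arguments meet {l} x y.
Arguments join {l} x y.
Arguments zero {l}.
Arguments one {l}.

Section Ops.
Context {M : LStruct}.

Definition nrm (x : M) : R := dist x zero.
Definition le (x y : M) : Prop := meet x y = x.
Definition lt (x y : M) : Prop := le x y /\ x <> y.
(* n x (iterated sum) and x^n (iterated product); used only for n >= 1 *)
Fixpoint nsum (n : nat) (x : M) : M :=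
  match n with O => zero | S O => x | S k => add (nsum k x) x end.
Fixpoint npow (x : M) (n : nat) : M :=
  match n with O => one | S O => x | S k => mul (npow x k) x end.
End Ops.

Record AA0 (M : LStruct) : Prop := {
  A1_addA : forall x y z : M, add x (add y z) = add (add x y) z;
  A1_addC : forall x y : M, add x y = add y x;
  A1_add0 : forall x : M, add zero x = x;
  A1_mulA : forall x y z : M, mul x (mul y z) = mul (mul x y) z;
  A1_mulC : forall x y : M, mul x y = mul y x;
  A1_mul1 : forall x : M, mul one x = x;
  A1_mul0 : forall x : M, mul zero x = zero;
  A1_mulDl : forall x y z : M, mul x (add y z) = add (mul x y) (mul x z);
  A1_meetA : forall x y z : M, meet x (meet y z) = meet (meet x y) z;
  A1_meetC : forall x y : M, meet x y = meet y x;
  A1_joinA : forall x y z : M, join x (join y z) = join (join x y) z;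
  A1_joinC : forall x y : M, join x y = join y x;
  A1_meetxx : forall x : M, meet x x = x;
  A1_joinxx : forall x : M, join x x = x;
  A1_meetK : forall x y : M, meet x (join x y) = x;
  A1_joinK : forall x y : M, join x (meet x y) = x;
  A1_addI : forall x y z : M, add x (meet y z) = meet (add x y) (add x z);
  A1_addU : forall x y z : M, add x (join y z) = join (add x y) (add x z);
  A1_mulI : forall x y z : M, mul x (meet y z) = meet (mul x y) (mul x z);
  A1_mulU : forall x y z : M, mul x (join y z) = join (mul x y) (mul x z);
  A1_ge0 : forall x : M, le zero x;
  (* (A2) inf_y d(x,(x/\y)+1) = 1 - |x|, and x <= x^2 *)
  A2_inf_lb : forall x y : M, 1 - nrm x <= dist x (add (meet x y) one);
  A2_inf_approx : forall (x : M) eps, 0 < eps ->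
      exists y : M, dist x (add (meet x y) one) < 1 - nrm x + eps;
  A2_sq : forall x : M, le x (mul x x);
  A3 : forall x y z : M, dist (add x z) (add y z) = dist x y;
  A4 : forall x y z : M, dist y z <= dist (mul x y) (mul x z) + 1 - nrm x;
  A5_eq : forall (n : nat) (x y z : M), (1 <= n)%nat ->
      dist (mul x y) (mul x z) = dist (mul (npow x n) y) (mul (npow x n) z);
  A5_le : forall x y z : M, dist (mul x y) (mul x z) <= dist y z;
  A6_sum : forall (n : nat) (x y : M), (1 <= n)%nat -> dist (nsum n x) (nsum n y) = dist x y;
  A6_pow : forall (n : nat) (x y : M), (1 <= n)%nat -> dist (npow x n) (npow y n) = dist x y;
  A7 : forall x y : M, nrm (meet x y) + nrm (join x y) = nrm x + nrm y;
  A8 : forall x y z : M, nrm (add (mul x y) z) = nrm (add (meet x y) z);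
  A9 : forall x y z : M, nrm (add (add x y) z) = nrm (add (join x y) z);
  (* (A10) inf_t d((x/\y)+t, y) = 0 *)
  A10 : forall (x y : M) eps, 0 < eps -> exists t : M, dist (add (meet x y) t) y < eps
}.

(* Main.v *)
From Pilot Require Import Defs.
From Stdlib Require Import Reals Lra.
Import Pilot.Defs.
Open Scope R_scope.

Lemma le_eps (A B : R) : (forall e, 0 < e -> A <= B + e) -> A <= B.
Proof.
  intros H. destruct (Rle_dec A B) as [h|h]; [exact h|].
  assert (h' : B < A) by lra. specialize (H ((A - B)/2)). lra.
Qed.

Lemma dist0_eq (M : LStruct) (u v : M) :
  (forall e, 0 < e -> dist u v <= e) -> u = v.
Proof.
  intros H. apply dist_sep. apply Rle_antisym.
  - apply le_eps. intros e He. rewrite Rplus_0_l. apply H; exact He.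
  - apply dist_nonneg.
Qed.

Section S.
Context (M : LStruct) (HM : AA0 M).

Lemma addr0 (u : M) : add u zero = u.
Proof. destruct HM. rewrite A1_addC, A1_add0. reflexivity. Qed.

Lemma mulr1 (u : M) : mul u one = u.
Proof. destruct HM. rewrite A1_mulC, A1_mul1. reflexivity. Qed.

Lemma meet0 (u : M) : meet zero u = zero.
Proof. destruct HM. exact (A1_ge0 u). Qed.

Lemma le_add (s u : M) : meet s (add s u) = s.
Proof.
  pose proof (A1_addI _ HM s zero u) as H.
  rewrite meet0, addr0 in H. symmetry. exact H.
Qed.

Lemma L (w : M) : 1 - nrm w <= 2 * dist (meet one w) one.
Proof.
  apply le_eps. intros e He.
  destruct (A10 _ HM one w (e/2)) as [s Hs]; [lra|].
  set (c := dist (meet one w) one).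
  assert (H1 : dist (add one s) w <= c + e/2).
  { eapply Rle_trans. apply (dist_tri M _ (add (meet one w) s)).
    rewrite (A3 _ HM), dist_sym. fold c. lra. }
  assert (Hs' : meet (add s one) s = s).
  { rewrite (A1_meetC _ HM). apply le_add. }
  assert (H2 : dist (add (meet w s) one) (add s one) <= dist w (add one s)).
  { rewrite (A3 _ HM).
    pose proof (meet_lip M w (add s one) s s) as h.
    rewrite Hs', dist_refl in h. rewrite (A1_addC _ HM one s). lra. }
  pose proof (A2_inf_lb _ HM w s) as h3.
  pose proof (dist_tri M w (add one s) (add (meet w s) one)) as h4.
  rewrite (A1_addC _ HM one s) in h4, H1, H2.
  rewrite (dist_sym M (add s one)) in h4.
  rewrite (dist_sym M (add s one)) in H1.
  lra.
Qed.

Lemma part1a (x : M) : nrm x = 1 -> le one x.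
Proof.
  intros Hn. unfold le. apply dist0_eq. intros e He.
  destruct (A2_inf_approx _ HM x e He) as [y Hy].
  rewrite Hn in Hy.
  assert (Hz : meet one (add (meet x y) one) = one).
  { rewrite (A1_addC _ HM). apply le_add. }
  pose proof (meet_lip M one one x (add (meet x y) one)) as h.
  rewrite Hz, dist_refl in h. lra.
Qed.

Lemma part1b (x : M) : le one x -> nrm x = 1.
Proof.
  intros H. pose proof (L x) as h. unfold le in H. rewrite H, dist_refl in h.
  pose proof (dist_le1 M x zero). unfold nrm in *. lra.
Qed.

Lemma part2a (x : M) : le x one -> mul x x = x.
Proof.
  intros H. unfold le in H.
  pose proof (A1_mulI _ HM x x one) as h. rewrite H, mulr1 in h.
  pose proof (A2_sq _ HM x) as h2. unfold le in h2.
  rewrite h, (A1_meetC _ HM). exact h2.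
Qed.

Lemma part2b (x : M) : mul x x = x -> le x one.
Proof.
  intros Hx. unfold le. set (a := meet x one).
  apply dist0_eq. intros e0 He0. set (e := e0 / 6).
  assert (He : 0 < e) by (unfold e; lra).
  destruct (A10 _ HM x one e He) as [t Ht]. fold a in Ht.
  assert (Hxa : mul x a = x).
  { unfold a. rewrite (A1_mulI _ HM), Hx, mulr1, (A1_meetxx _ HM). reflexivity. }
  assert (Haa : mul a a = a).
  { assert (E : mul a a = meet (mul a x) a).
    { unfold a at 2. rewrite (A1_mulI _ HM), mulr1. reflexivity. }
    rewrite E, (A1_mulC _ HM a x), Hxa. unfold a.
    rewrite (A1_meetA _ HM), (A1_meetxx _ HM). reflexivity. }
  assert (Hxt : dist (mul x t) zero < e).
  { pose proof (mul_lip M x x one (add a t)) as h.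
    rewrite dist_refl, (A1_mulDl _ HM), Hxa, mulr1 in h.
    rewrite <- (A1_add0 _ HM x) in h at 1.
    rewrite (A1_addC _ HM x (mul x t)), (A3 _ HM) in h.
    rewrite dist_sym. rewrite dist_sym in Ht. lra. }
  assert (Hat : dist (mul a t) zero < e).
  { pose proof (mul_lip M a a one (add a t)) as h.
    rewrite dist_refl, (A1_mulDl _ HM), Haa, mulr1 in h.
    rewrite <- (A1_add0 _ HM a) in h at 1.
    rewrite (A1_addC _ HM a (mul a t)), (A3 _ HM) in h.
    rewrite dist_sym. rewrite dist_sym in Ht. lra. }
  set (m := add x t).
  assert (Hmx : dist (mul m x) x < e).
  { unfold m. rewrite (A1_mulC _ HM), (A1_mulDl _ HM), Hx.
    rewrite <- (A1_add0 _ HM x) at 3.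
    rewrite (A1_addC _ HM x (mul x t)), (A3 _ HM). exact Hxt. }
  assert (Hma : dist (mul m a) x < e).
  { unfold m. rewrite (A1_mulC _ HM), (A1_mulDl _ HM), (A1_mulC _ HM a x), Hxa.
    rewrite <- (A1_add0 _ HM x) at 2.
    rewrite (A1_addC _ HM x (mul a t)), (A3 _ HM). exact Hat. }
  assert (H4 := A4 _ HM m x a).
  assert (Hord : meet (add a t) m = add a t).
  { unfold m. pose proof (A1_addI _ HM t a x) as h.
    assert (E : meet a x = a).
    { unfold a. rewrite (A1_meetC _ HM), (A1_meetA _ HM), (A1_meetxx _ HM). reflexivity. }
    rewrite E, !(A1_addC _ HM t) in h. symmetry. exact h. }
  assert (Hc : dist (meet one m) one <= 2 * e).
  { pose proof (meet_lip M one (add a t) m m) as h.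
    rewrite Hord, dist_refl in h.
    pose proof (dist_tri M (meet one m) (add a t) one).
    pose proof (dist_sym M one (add a t)). lra. }
  pose proof (L m) as HL.
  pose proof (dist_tri M (mul m x) x (mul m a)).
  pose proof (dist_sym M x (mul m a)).
  pose proof (dist_le1 M m zero). unfold nrm in HL.
  pose proof (dist_sym M a x).
  assert (e0 = 6 * e) by (unfold e; lra).
  unfold nrm in H4. lra.
Qed.
End S.

Theorem mainTheorem17 (M : LStruct) (HM : AA0 M) (x : M) :
  (nrm x = 1 <-> le one x) /\
  (lt x one -> nrm x < 1) /\
  (mul x x = x <-> le x one).
Proof.
  split; [split; [apply part1a | apply part1b]; exact HM|].
  split; [|split; [apply part2b | apply part2a]; exact HM].
  intros [H1 H2].
  pose proof (dist_le1 M x zero) as h. unfold nrm in *.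
  destruct (Rle_lt_or_eq_dec _ _ h) as [h'|h']; [exact h'|].
  exfalso. apply H2. pose proof (part1a M HM x h') as h3.
  unfold le in *. rewrite (A1_meetC _ HM) in h3. congruence.
Qed.
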